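(* If $K$ is a compact convex subset of $\mathbb{R}^n$ of dimension $n$, then there exist regular unit normal vectors $u_0, \ldots, u_n$ of $K$, at distinct exposed points $x_0, \ldots, x_n$ of $K$ (with $x_i = K^{u_i}$), such that $u_0, \ldots, u_n$ are the outward unit normal vectors of the facets of some $n$-dimensional simplex in $\mathbb{R}^n$.
   Context: For a unit vector $u$, $K^u=\{x\in K : x\cdot u = h_K(u)\}$ where $h_K(u)=\max_{x\in K}x\cdot u$. A point $x$ is an exposed point of $K$ if $\{x\} = K^u$ for some unit vector $u$; such a direction $u$ is called a regular unit normal to $K$ (at $x$). *)

(* Defs.v *)
From HB Require Import structures.
From mathcomp Require Import all_boot all_order all_algebra.
From mathcomp Require Import all_classical all_reals all_analysis.
Set Implicit Arguments. Unset Strict Implicit. Unset Printing Implicit Defensive.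
Import Order.TTheory GRing.Theory Num.Theory.
Import numFieldNormedType.Exports.
Local Open Scope classical_set_scope.
Local Open Scope ring_scope.

Section Defs.
Variables (R : realType) (n : nat).
Notation vec := 'rV[R]_n.

Definition dot (x y : vec) : R := \sum_(i < n) x 0 i * y 0 i.

Definition unit_vec (u : vec) : Prop := dot u u = 1.

Definition affine_hull (K : set vec) : set vec :=
  [set z | exists (m : nat) (p : 'I_m -> vec) (w : 'I_m -> R),
     (forall i, K (p i)) /\ \sum_(i < m) w i = 1 /\ z = \sum_(i < m) w i *: p i].

Definition full_dim (K : set vec) : Prop := affine_hull K = setT.

(* K^u = { x in K : x . u = h_K(u) }, h_K(u) = max_{y in K} y . u *)
Definition support_set (K : set vec) (u : vec) : set vec :=
  [set x | K x /\ forall y, K y -> dot y u <= dot x u].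

Definition regular_normal_at (K : set vec) (u x : vec) : Prop :=
  unit_vec u /\ support_set K u = [set x].

Definition exposed_point (K : set vec) (x : vec) : Prop :=
  exists u, regular_normal_at K u x.

Definition aff_indep (v : 'I_n.+1 -> vec) : Prop :=
  forall c : 'I_n.+1 -> R, \sum_(j < n.+1) c j = 0 ->
    \sum_(j < n.+1) c j *: v j = 0 -> forall j, c j = 0.

(* u i is the outward unit normal of the facet conv{v j : j != i} of the
   n-simplex with (affinely independent) vertices v *)
Definition outward_facet_normals (v u : 'I_n.+1 -> vec) : Prop :=
  aff_indep v /\
  forall i, unit_vec (u i) /\
    (forall j k, j != i -> k != i -> dot (v j) (u i) = dot (v k) (u i)) /\
    (forall j, j != i -> dot (v i) (u i) < dot (v j) (u i)).

Definition simplex_facet_normals (u : 'I_n.+1 -> vec) : Prop :=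
  exists v : 'I_n.+1 -> vec, outward_facet_normals v u.

End Defs.

(* Main.v *)
Require Import Defs.
From HB Require Import structures.
From mathcomp Require Import all_boot all_order all_algebra.
From mathcomp Require Import all_classical all_reals all_analysis.
From mathcomp Require Import ring lra perm.
Import Order.TTheory GRing.Theory Num.Theory.
Import numFieldNormedType.Exports.
Local Open Scope classical_set_scope.
Local Open Scope ring_scope.
Set Implicit Arguments. Unset Strict Implicit. Unset Printing Implicit Defensive.

Section Alg.
Variables (R : realType) (n : nat).
Local Notation vec := 'rV[R]_n.

Lemma dotC (x y : vec) : dot x y = dot y x.
Proof. by apply: eq_bigr => i _; rewrite mulrC. Qed.
Lemma dotDl (x y z : vec) : dot (x + y) z = dot x z + dot y z.
Proof. by rewrite /dot -big_split; apply: eq_bigr => i _; rewrite mxE mulrDl. Qed.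
Lemma dotDr (x y z : vec) : dot z (x + y) = dot z x + dot z y.
Proof. by rewrite dotC dotDl !(dotC z). Qed.
Lemma dotZl a (x y : vec) : dot (a *: x) y = a * dot x y.
Proof. by rewrite /dot mulr_sumr; apply: eq_bigr => i _; rewrite mxE mulrA. Qed.
Lemma dotZr a (x y : vec) : dot y (a *: x) = a * dot y x.
Proof. by rewrite dotC dotZl dotC. Qed.
Lemma dotNl (x y : vec) : dot (- x) y = - dot x y.
Proof. by rewrite -scaleN1r dotZl mulN1r. Qed.
Lemma dotNr (x y : vec) : dot y (- x) = - dot y x.
Proof. by rewrite dotC dotNl dotC. Qed.
Lemma dotBl (x y z : vec) : dot (x - y) z = dot x z - dot y z.
Proof. by rewrite dotDl dotNl. Qed.
Lemma dotBr (x y z : vec) : dot z (x - y) = dot z x - dot z y.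
Proof. by rewrite dotDr dotNr. Qed.
Lemma dot0l (x : vec) : dot 0 x = 0.
Proof. by rewrite /dot big1 // => i _; rewrite mxE mul0r. Qed.
Lemma dot0r (x : vec) : dot x 0 = 0.
Proof. by rewrite dotC dot0l. Qed.
Lemma dot_suml I (r : seq I) (P : pred I) (F : I -> vec) (y : vec) :
  dot (\sum_(i <- r | P i) F i) y = \sum_(i <- r | P i) dot (F i) y.
Proof.
elim/big_rec2: _ => [|i a x _ <-]; first by rewrite dot0l.
by rewrite dotDl.
Qed.
Lemma dot_sumr I (r : seq I) (P : pred I) (F : I -> vec) (y : vec) :
  dot y (\sum_(i <- r | P i) F i) = \sum_(i <- r | P i) dot y (F i).
Proof. by rewrite dotC dot_suml; apply: eq_bigr => i _; rewrite dotC. Qed.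
Lemma dot_ge0 (x : vec) : 0 <= dot x x.
Proof. by apply: sumr_ge0 => i _; rewrite -expr2 sqr_ge0. Qed.
Lemma dot_eq0 (x : vec) : dot x x = 0 -> x = 0.
Proof.
move=> /eqP; rewrite /dot psumr_eq0 => [/allP H|i _]; last by rewrite -expr2 sqr_ge0.
apply/rowP => i; rewrite mxE; have := H i (mem_index_enum i).
by rewrite -expr2 sqrf_eq0 => /eqP.
Qed.
End Alg.

Section Mat.
Variables (R : realType) (n : nat).
Local Notation vec := 'rV[R]_n.
Local Notation N := n.+1.

Definition rowy (y : vec) : 'rV[R]_N :=
  \row_j (match unlift ord0 j with None => 1 | Some k => y 0 k end).
Definition rowz (y : vec) : 'rV[R]_N :=
  \row_j (match unlift ord0 j with None => 0 | Some k => y 0 k end).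
Definition Am (q : 'I_N -> vec) : 'M[R]_N := \matrix_i rowy (q i).
Definition upd (q : 'I_N -> vec) i y := fun j => if j == i then y else q j.
Definition acof q i : vec := \row_k cofactor (Am q) i (lift ord0 k).
Definition bcof q i := cofactor (Am q) i ord0.

Lemma AmE q i j : Am q i j = rowy (q i) 0 j.
Proof. by rewrite mxE. Qed.

Lemma sum_rowy_cof (y : vec) (A : 'M[R]_N) i :
  \sum_k rowy y 0 k * cofactor A i k =
  cofactor A i ord0 + dot y (\row_k cofactor A i (lift ord0 k)).
Proof.
rewrite big_ord_recl /rowy mxE unlift_none mul1r; congr (_ + _).
by apply: eq_bigr => k _; rewrite !mxE liftK.
Qed.

Lemma sum_rowz_cof (y : vec) (A : 'M[R]_N) i :
  \sum_k rowz y 0 k * cofactor A i k = dot y (\row_k cofactor A i (lift ord0 k)).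
Proof.
rewrite big_ord_recl /rowz mxE unlift_none mul0r add0r.
by apply: eq_bigr => k _; rewrite !mxE liftK.
Qed.

Lemma cof_upd q i y k : cofactor (Am (upd q i y)) i k = cofactor (Am q) i k.
Proof.
rewrite /cofactor; congr (_ * _); congr (\det _).
apply/matrixP => a b; rewrite !mxE /upd.
have -> : (lift i a == i) = false by rewrite eq_sym (negbTE (neq_lift i a)).
by [].
Qed.

Lemma det_upd q i y : \det (Am (upd q i y)) = bcof q i + dot y (acof q i).
Proof.
rewrite (expand_det_row _ i).
under eq_bigr => k _ do rewrite cof_upd AmE /upd eqxx.
by rewrite sum_rowy_cof.
Qed.

Lemma adjE1 q i j : bcof q i + dot (q j) (acof q i) = \det (Am q) * (j == i)%:R.
Proof.
have := congr1 (fun M : 'M[R]_N => M j i) (mul_mx_adj (Am q)).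
rewrite !mxE mulr_natr => <-; rewrite -sum_rowy_cof.
by apply: eq_bigr => k _; rewrite !mxE.
Qed.

Lemma adjE2 q : \sum_i acof q i = 0.
Proof.
apply/rowP => k; rewrite summxE mxE.
have := congr1 (fun M : 'M[R]_N => M (lift ord0 k) ord0) (mul_adj_mx (Am q)).
rewrite !mxE eq_sym (negbTE (neq_lift _ _)) mulr0n => E; rewrite -[RHS]E.
by apply: eq_bigr => i _; rewrite !mxE unlift_none mulr1.
Qed.

Lemma rowz_adj q (z : vec) i : (rowz z *m \adj (Am q)) 0 i = dot z (acof q i).
Proof.
rewrite mxE -sum_rowz_cof; apply: eq_bigr => k _; rewrite [\adj _ _ _]mxE.
by [].
Qed.

Lemma rowy_affine m (p : 'I_m -> vec) (w : 'I_m -> R) :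
  \sum_i w i = 1 -> rowy (\sum_i w i *: p i) = \sum_i w i *: rowy (p i).
Proof.
move=> w1; apply/rowP => j; rewrite summxE /rowy mxE.
case E: (unlift ord0 j) => [k|].
  rewrite summxE; apply: eq_bigr => i _; by rewrite !mxE E.
rewrite -[LHS]w1; apply: eq_bigr => i _; by rewrite !mxE E mulr1.
Qed.

End Mat.

Section Lin.
Variables (R : realType) (n : nat).
Local Notation vec := 'rV[R]_n.
Local Notation N := n.+1.

Definition nrm (g : vec) := Num.sqrt (dot g g).
Definition nz (g : vec) : vec := (nrm g)^-1 *: g.

Lemma nrm_gt0 (g : vec) : g != 0 -> 0 < nrm g.
Proof.
move=> g0; rewrite /nrm sqrtr_gt0 lt_def dot_ge0 andbT.
by apply/eqP => /dot_eq0 /eqP; apply/negP.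
Qed.

Lemma unit_nz (g : vec) : g != 0 -> unit_vec (nz g).
Proof.
move=> g0; have h := nrm_gt0 g0; rewrite /unit_vec /nz dotZl dotZr.
have e : dot g g = nrm g ^+ 2 by rewrite /nrm sqr_sqrtr // dot_ge0.
rewrite e; field; exact: lt0r_neq0.
Qed.

Definition Gt (g : 'I_N -> vec) : 'M[R]_(n, N) := \matrix_(k, i) g i 0 k.

Lemma mul_Gt (v : vec) g i : (v *m Gt g) 0 i = dot v (g i).
Proof. by rewrite mxE; apply: eq_bigr => k _; rewrite mxE. Qed.

Definition wj (j : 'I_N) : 'rV[R]_N := \row_i (1 - N%:R * (i == j)%:R).

Lemma sum_ind (j : 'I_N) (c : 'I_N -> R) : \sum_i c i * (i == j)%:R = c j.
Proof.
rewrite (bigD1 j) //= eqxx mulr1 big1 ?addr0 // => i /negbTE ->.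
by rewrite mulr0.
Qed.

Lemma simplex_from (g : 'I_N -> vec) :
  \sum_i g i = 0 -> (forall i, g i != 0) ->
  (forall z : vec, (forall i, dot z (g i) = 0) -> z = 0) ->
  outward_facet_normals (fun j => (wj j) *m pinvmx (Gt g)) (fun i => nz (g i)).
Proof.
move=> gsum gnz span.
pose L : 'M[R]_(N, 1) := const_mx 1.
have rf : row_free (Gt g).
  apply: inj_row_free => v /rowP vE; apply: span => i.
  by rewrite -mul_Gt vE mxE.
have GL : (Gt g <= kermx L)%MS.
  apply/sub_kermxP; apply/matrixP => k l; rewrite !mxE.
  have := congr1 (fun x : vec => x 0 k) gsum; rewrite summxE mxE => E; rewrite -[RHS]E.
  by apply: eq_bigr => i _; rewrite !mxE mulr1.
have rkL : \rank L = 1%N.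
  apply/eqP; rewrite eqn_leq rank_leq_col lt0n mxrank_eq0.
  apply/eqP => /matrixP /(_ ord0 ord0); rewrite !mxE => /eqP; by rewrite oner_eq0.
have LG : (kermx L <= Gt g)%MS.
  rewrite -(mxrank_leqif_sup GL).2 mxrank_ker rkL subn1 /=.
  by move: rf; rewrite /row_free.
have wjL j : (wj j <= Gt g)%MS.
  apply: submx_trans LG; apply/sub_kermxP; apply/rowP => l; rewrite !mxE.
  under eq_bigr => i _ do rewrite !mxE mulr1.
  rewrite sumrB sum_ind sumr_const card_ord.
  by rewrite -mulr_natl mulr1 subrr.
have dv j i : dot ((wj j) *m pinvmx (Gt g)) (g i) = 1 - N%:R * (i == j)%:R.
  by rewrite -mul_Gt mulmxKpV // mxE.
have Npos : (0 : R) < N%:R by rewrite ltr0n.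
split.
  move=> c csum cv j.
  have := congr1 (fun x => dot x (g j)) cv; rewrite dot_suml dot0l.
  under eq_bigr => i _ do rewrite dotZl dv mulrBr mulr1 mulrCA eq_sym.
  rewrite sumrB csum -mulr_sumr sum_ind sub0r => /eqP; rewrite oppr_eq0 mulf_eq0.
  by rewrite (negbTE (lt0r_neq0 Npos)) /= => /eqP.
move=> i; split; first exact: unit_nz.
have cpos := nrm_gt0 (gnz i).
split.
  move=> j k ji ki; rewrite /nz !dotZr !dv.
  by rewrite eq_sym (negbTE ji) eq_sym (negbTE ki).
move=> j ji; rewrite /nz !dotZr !dv eqxx eq_sym (negbTE ji) mulr1 mulr0 subr0.
rewrite ltr_pM2l ?invr_gt0 // ltrBlDr ltrDl //.
Qed.
End Lin.

Section NonDeg.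
Variables (R : realType) (n : nat) (K : set 'rV[R]_n).
Local Notation vec := 'rV[R]_n.
Local Notation N := n.+1.
Hypothesis fd : full_dim K.

Lemma good_full (M : 'M[R]_N) :
  (forall y, K y -> (rowy y <= M)%MS) -> row_full M.
Proof.
move=> H.
have Hz z : (rowy z <= M)%MS.
  have : affine_hull K z by rewrite fd.
  move=> [m [p [w [pK [w1 ->]]]]].
  rewrite rowy_affine //; apply: summx_sub => i _.
  by apply: scalemx_sub; apply: H.
rewrite -sub1mx; apply/row_subP => j; rewrite row1.
case: (unliftP ord0 j) => [k ->|->].
  have -> : delta_mx 0 (lift ord0 k) = rowy (delta_mx 0 k) - rowy (0 : vec).
    apply/rowP => l; rewrite !mxE; case: (unliftP ord0 l) => [k' ->|->].
      by rewrite !mxE (inj_eq (@lift_inj _ _)) subr0.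
    by rewrite (negbTE (neq_lift _ _)) andbF subrr.
  by apply: addmx_sub; rewrite ?Hz // -scaleN1r; apply: scalemx_sub.
have -> : delta_mx 0 (ord0 : 'I_N) = rowy (0 : vec).
  apply/rowP => l; rewrite !mxE; case: (unliftP ord0 l) => [k' ->|->].
    by rewrite !mxE eq_sym (negbTE (neq_lift _ _)) andbF.
  by rewrite eqxx.
exact: Hz.
Qed.

End NonDeg.

Section NonDeg2.
Variables (R : realType) (n : nat) (K : set 'rV[R]_n).
Local Notation vec := 'rV[R]_n.
Local Notation N := n.+1.
Hypothesis fd : full_dim K.

Lemma K_nonempty : exists x, K x.
Proof.
have : affine_hull K 0 by rewrite fd.
move=> [m [p [w [pK [w1 _]]]]].
case: m p w pK w1 => [|m] p w pK w1.
  by move: w1; rewrite big_ord0 => /eqP; rewrite eq_sym oner_eq0.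
by exists (p ord0).
Qed.

Lemma rank_step (q : 'I_N -> vec) : (forall i, K (q i)) -> (\rank (Am q) < N)%N ->
  exists q', (forall i, K (q' i)) /\ (\rank (Am q) < \rank (Am q'))%N.
Proof.
move=> qK rk.
have [[y [Ky ny]]|H] := pselect (exists y, K y /\ ~~ (rowy y <= Am q)%MS); last first.
  have : row_full (Am q).
    apply: (good_full fd) => y Ky; apply/negPn/negP => ny; apply: H; by exists y.
  by rewrite /row_full (ltn_eqF rk).
have : kermx (Am q) != 0 by rewrite kermx_eq0 /row_free (ltn_eqF rk).
move/rowV0Pn => [v vk v0].
have vA : v *m Am q = 0 by apply/sub_kermxP.
have [i vi] : exists i, v 0 i != 0.
  case/boolP: [exists i, v 0 i != 0] => [/existsP//|/existsPn H].
  have v00 : v = 0 by apply/rowP => j; rewrite mxE; apply/eqP/negbNE/H.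
  by rewrite v00 eqxx in v0.
pose q' := upd q i y.
have sub : (Am q <= Am q')%MS.
  apply/row_subP => j; case: (eqVneq j i) => [->|ji].
    have : \sum_l v 0 l *: row l (Am q) = 0 by rewrite -mulmx_sum_row.
    rewrite (bigD1 i) //= => /eqP; rewrite addr_eq0 => /eqP E.
    have -> : row i (Am q) =
        (v 0 i)^-1 *: (- \sum_(l | l != i) v 0 l *: row l (Am q)).
      by rewrite -E scalerA mulVf // scale1r.
    apply: scalemx_sub; rewrite -scaleN1r; apply: scalemx_sub.
    apply: summx_sub => l li; apply: scalemx_sub.
    have -> : row l (Am q) = row l (Am q') by rewrite !rowK /q' /upd (negbTE li).
    exact: row_sub.
  have -> : row j (Am q) = row j (Am q') by rewrite !rowK /q' /upd (negbTE ji).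
  exact: row_sub.
have ry : (rowy y <= Am q')%MS.
  have <- : row i (Am q') = rowy y by rewrite rowK /q' /upd eqxx.
  exact: row_sub.
exists q'; split.
  by move=> j; rewrite /q' /upd; case: (j == i).
apply: (@leq_trans (\rank (Am q + rowy y)%MS)).
  apply: rank_ltmx; rewrite ltmxE addsmxSl /=; apply/negP => H.
  by move: ny; rewrite (submx_trans (addsmxSr _ _) H).
by apply: mxrankS; rewrite addsmx_sub sub ry.
Qed.

Lemma exists_unit : exists q, (forall i, K (q i)) /\ Am q \in unitmx.
Proof.
have [x0 Kx0] := K_nonempty.
suff : forall k, (k <= N)%N -> exists q, (forall i, K (q i)) /\ (k <= \rank (Am q))%N.
  move=> /(_ N (leqnn _)) [q [qK rk]]; exists q; split => //.
  by rewrite -row_free_unit /row_free eqn_leq rank_leq_row rk.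
elim=> [_|k IH kN]; first by exists (fun _ => x0).
have [q [qK rk]] := IH (ltnW kN).
have [lt|ge] := ltnP k (\rank (Am q)); first by exists q.
have : (\rank (Am q) < N)%N by apply: leq_ltn_trans ge kN.
move=> /(rank_step qK) [q' [q'K rk']]; exists q'; split => //.
exact: leq_ltn_trans rk rk'.
Qed.

Lemma exists_pos : (0 < n)%N -> exists q, (forall i, K (q i)) /\ 0 < \det (Am q).
Proof.
move=> n0; have [q [qK qu]] := exists_unit.
have d0 : \det (Am q) != 0 by move: qu; rewrite unitmxE unitfE.
have [dpos|dneg] := ltP 0 (\det (Am q)); first by exists q.
pose s := tperm (ord0 : 'I_N) ord_max.
exists (fun i => q (s i)); split => [i|]; first exact: qK.
have -> : Am (fun i => q (s i)) = perm_mx s *m Am q.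
  rewrite -row_permE; apply/matrixP => i j; rewrite !mxE.
  by [].
rewrite det_mulmx det_perm odd_tperm.
have -> : (ord0 != ord_max :> 'I_N) by rewrite -val_eqE /= eq_sym -lt0n.
by rewrite expr1 mulN1r oppr_gt0 lt_neqAle d0 dneg.
Qed.
End NonDeg2.

Section Cont.
Variables (R : realType) (n : nat).
Local Notation vec := 'rV[R]_n.
Local Notation N := n.+1.
Local Notation Cfg := {ptws 'I_N -> vec}.

Lemma cont_ext (T : topologicalType) (f g : T -> R) :
  (forall x, f x = g x) -> continuous g -> continuous f.
Proof. by move=> /funext ->. Qed.
Lemma contD (T : topologicalType) (f g : T -> R) :
  continuous f -> continuous g -> continuous (fun x => f x + g x).
Proof. by move=> hf hg x; apply: cvgD; [exact: hf|exact: hg]. Qed.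
Lemma contM (T : topologicalType) (f g : T -> R) :
  continuous f -> continuous g -> continuous (fun x => f x * g x).
Proof. by move=> hf hg x; apply: cvgM; [exact: hf|exact: hg]. Qed.
Lemma contC (T : topologicalType) (c : R) : continuous (fun _ : T => c).
Proof. exact: cst_continuous. Qed.
Lemma cont_sum (T : topologicalType) I (r : seq I) (P : pred I) (F : I -> T -> R) :
  (forall i, continuous (F i)) -> continuous (fun x => \sum_(i <- r | P i) F i x).
Proof.
move=> hF; elim: r => [|i r IH].
  apply: (@cont_ext _ _ (fun _ => 0)) => [x|]; [by rewrite big_nil|exact: contC].
case Pi: (P i).
  apply: (@cont_ext _ _ (fun x => F i x + \sum_(j <- r | P j) F j x)) => [x|].
    by rewrite big_cons Pi.
  exact: contD.
apply: (@cont_ext _ _ (fun x => \sum_(j <- r | P j) F j x)) => [x|//].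
by rewrite big_cons Pi.
Qed.
Lemma cont_prod (T : topologicalType) I (r : seq I) (P : pred I) (F : I -> T -> R) :
  (forall i, continuous (F i)) -> continuous (fun x => \prod_(i <- r | P i) F i x).
Proof.
move=> hF; elim: r => [|i r IH].
  apply: (@cont_ext _ _ (fun _ => 1)) => [x|]; [by rewrite big_nil|exact: contC].
case Pi: (P i).
  apply: (@cont_ext _ _ (fun x => F i x * \prod_(j <- r | P j) F j x)) => [x|].
    by rewrite big_cons Pi.
  exact: contM.
apply: (@cont_ext _ _ (fun x => \prod_(j <- r | P j) F j x)) => [x|//].
by rewrite big_cons Pi.
Qed.

Lemma cont_coord (i : 'I_N) k : continuous (fun q : Cfg => q i 0 k).
Proof.
move=> q; exact: (@continuous_comp _ _ _ (fun q : Cfg => q i)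
  (fun M : vec => M 0 k) q (@proj_continuous _ _ i q) (@coord_continuous _ _ _ 0 k _)).
Qed.

Lemma cont_entry i j : continuous (fun q : Cfg => Am q i j).
Proof.
case E: (unlift ord0 j) => [k|].
  apply: (@cont_ext _ _ (fun q : Cfg => q i 0 k)) => [q|]; last exact: cont_coord.
  by rewrite AmE /rowy mxE E.
apply: (@cont_ext _ _ (fun _ => 1)) => [q|]; last exact: contC.
by rewrite AmE /rowy mxE E.
Qed.

Lemma cont_det : continuous (fun q : Cfg => \det (Am q)).
Proof.
rewrite /determinant; apply: cont_sum => s; apply: contM; first exact: contC.
apply: cont_prod => i; exact: cont_entry.
Qed.

Definition Qd (q : 'I_N -> vec) : R :=
  \sum_j dot (q j) (q j) / 2 - dot (\sum_j q j) (\sum_j q j) / (2 * N%:R).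

Lemma cont_dotq (f g : Cfg -> vec) :
  (forall k, continuous (fun q => f q 0 k)) -> (forall k, continuous (fun q => g q 0 k)) ->
  continuous (fun q => dot (f q) (g q)).
Proof.
move=> hf hg; rewrite /dot; apply: cont_sum => k; exact: contM.
Qed.

Lemma cont_Qd : continuous (fun q : Cfg => Qd q).
Proof.
rewrite /Qd; apply: (@cont_ext _ _ (fun q : Cfg =>
  \sum_j dot (q j) (q j) / 2 + (-1 / (2 * N%:R)) * dot (\sum_j q j) (\sum_j q j))).
  by move=> q; rewrite mulrC mulN1r mulNr.
apply: contD.
  apply: cont_sum => j; apply: contM; last exact: contC.
  by apply: cont_dotq => k; exact: cont_coord.
apply: contM; first exact: contC.
have h : forall k, continuous (fun q : Cfg => (\sum_j q j) 0 k).
  move=> k; apply: (@cont_ext _ _ (fun q : Cfg => \sum_j q j 0 k)) => [q|].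
    by rewrite summxE.
  by apply: cont_sum => j; exact: cont_coord.
exact: cont_dotq.
Qed.

Lemma max_exists (K : set vec) (f : Cfg -> R) : continuous f -> compact K ->
  (exists x, K x) ->
  exists p : Cfg, (forall i, K (p i)) /\
    forall q : Cfg, (forall i, K (q i)) -> f q <= f p.
Proof.
move=> cf cK [x0 Kx0].
have cA : compact [set q : Cfg | forall i, K (q i)].
  exact: (@tychonoff 'I_N (fun _ => vec) (fun _ => K)).
have A0 : [set q : Cfg | forall i, K (q i)] !=set0 by exists (fun _ => x0).
have := compact_EVT_max A0 cA (continuous_subspaceT cf).
move=> [p pA pmax]; exists p; split; first by move: pA; rewrite inE.
by move=> q qK; apply: pmax; rewrite inE.
Qed.
End Cont.

Section Main.
Variables (R : realType) (n : nat).
Local Notation vec := 'rV[R]_n.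
Local Notation N := n.+1.

Lemma sum_upd (p : 'I_N -> vec) i y :
  \sum_j upd p i y j = \sum_j p j + (y - p i).
Proof.
rewrite (bigD1 i) //= [in RHS](bigD1 i) //= /upd eqxx.
under eq_bigr => j /negbTE -> do [].
by rewrite [RHS]addrC addrA subrK.
Qed.

Lemma sumdot_upd (p : 'I_N -> vec) i y :
  \sum_j dot (upd p i y j) (upd p i y j) =
  \sum_j dot (p j) (p j) + (dot y y - dot (p i) (p i)).
Proof.
rewrite (bigD1 i) //= [in RHS](bigD1 i) //= /upd eqxx.
under eq_bigr => j /negbTE -> do [].
by rewrite [RHS]addrC addrA subrK.
Qed.

Lemma Qd_upd (p : 'I_N -> vec) i y :
  Qd (upd p i y) - Qd p =
  dot (y - p i) (p i - (N%:R)^-1 *: \sum_j p j) +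
  (n%:R / (2 * N%:R)) * dot (y - p i) (y - p i).
Proof.
rewrite /Qd -!mulr_suml sumdot_upd sum_upd.
set S := \sum_j p j; set x := p i.
have -> : y = x + (y - x) by rewrite addrC subrK.
set d := y - x.
have -> : x + d - x = d by rewrite addrC addKr.
set T := \sum_j dot (p j) (p j).
rewrite !(dotDl, dotDr, dotBr, dotZr, dotNl, dotNr) !(dotC y x) !(dotC S y) !(dotC S x).
have hN : (N%:R : R) = n%:R + 1 by rewrite -[n.+1]addn1 natrD.
rewrite hN; field.
by rewrite -hN pnatr_eq0.
Qed.
End Main.

Section Main2.
Variables (R : realType) (n : nat) (K : set 'rV[R]_n).
Local Notation vec := 'rV[R]_n.
Local Notation N := n.+1.
Local Notation Cfg := {ptws 'I_N -> vec}.
Hypotheses (n0 : (0 < n)%N) (cK : compact K) (fd : full_dim K).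

Lemma not_singleton (x : vec) : ~ (forall y, K y -> y = x).
Proof.
move=> H.
pose e : vec := const_mx 1.
have : affine_hull K (x + e) by rewrite fd.
move=> [m [p [w [pK [w1 E]]]]].
have : x + e = x.
  rewrite E; under eq_bigr => j _ do rewrite (H _ (pK j)).
  by rewrite -scaler_suml w1 scale1r.
move/(congr1 (fun v : vec => v 0 (Ordinal n0))); rewrite !mxE.
by move/eqP; rewrite -subr_eq0 addrAC subrr add0r oner_eq0.
Qed.

Lemma main_construction : exists (p : 'I_N -> vec) (g : 'I_N -> vec),
  (0 < \det (Am p)) /\ (\sum_i g i = 0) /\
  (forall z : vec, (forall i, dot z (g i) = 0) -> z = 0) /\
  (forall i, K (p i)) /\
  exists mu : R, 0 < mu /\
  forall i y, K y -> dot (y - p i) (g i) <= - (mu * dot (y - p i) (y - p i)).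
Proof.
have [q0 [q0K q0pos]] := exists_pos fd n0.
have Kne := K_nonempty fd.
have [pM [_ pMmax]] := max_exists (@cont_Qd R n) cK Kne.
have cnQ : continuous (fun q : Cfg => - Qd q).
  apply: (@cont_ext _ _ _ (fun q : Cfg => -1 * Qd q)) => [q|]; first by rewrite mulN1r.
  by apply: contM; [exact: contC|exact: cont_Qd].
have [pm [_ pmmin]] := max_exists cnQ cK Kne.
set M := Qd pM; set m := Qd pm.
have Mge q : (forall i, K (q i)) -> Qd q <= M by move=> qK; exact: pMmax.
have mle q : (forall i, K (q i)) -> m <= Qd q.
  by move=> qK; rewrite -lerN2; exact: pmmin.
have Mm : 0 <= M - m by rewrite subr_ge0 (le_trans (mle _ q0K) (Mge _ q0K)).
set D0 := \det (Am q0).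
pose eps := D0 / (2 * (M - m + 1)).
have epos : 0 < eps by rewrite divr_gt0 // mulr_gt0 // ltr_wpDl.
pose Psi := fun q : Cfg => \det (Am q) + eps * Qd q.
have cPsi : continuous Psi.
  by apply: contD; [exact: cont_det|apply: contM; [exact: contC|exact: cont_Qd]].
have [p [pK pmax]] := max_exists cPsi cK Kne.
have dpos : 0 < \det (Am p).
  have h1 := pmax _ q0K; rewrite /Psi in h1.
  have h2 := Mge _ pK; have h3 := mle _ q0K.
  have C0 : 0 < M - m + 1 by lra.
  have h4 : eps * (M - m) <= D0 / 2.
    have -> : D0 / 2 = eps * (M - m + 1).
      rewrite /eps; field; exact: lt0r_neq0.
    rewrite ler_pM2l //; lra.
  have h5 : eps * (Qd p - Qd q0) <= eps * (M - m).
    by rewrite ler_pM2l //; lra.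
  have : 0 < D0 by [].
  rewrite -/D0 in h1; nra.
pose pbar : vec := (N%:R)^-1 *: \sum_j p j.
pose g := fun i => acof p i + eps *: (p i - pbar).
exists p, g; split => //.
have Nne : (N%:R : R) != 0 by rewrite pnatr_eq0.
split.
  rewrite big_split /= adjE2 add0r -scaler_sumr sumrB sumr_const card_ord.
  by rewrite /pbar -scaler_nat scalerA mulfV // scale1r subrr scaler0.
split.
  move=> z zg.
  have pu : Am p \in unitmx by rewrite unitmxE unitfE lt0r_neq0.
  pose c := rowz z *m invmx (Am p).
  have cA : c *m Am p = rowz z by rewrite /c mulmxKV.
  have za i : dot z (acof p i) = \det (Am p) * c 0 i.
    by rewrite -rowz_adj -cA -mulmxA mul_mx_adj mul_mx_scalar mxE.
  have csum : \sum_i c 0 i = 0.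
    have := congr1 (fun r : 'rV[R]_N => r 0 ord0) cA.
    rewrite !mxE unlift_none => E; rewrite -[RHS]E.
    apply: eq_bigr => i _; by rewrite !mxE unlift_none mulr1.
  have csp : \sum_i c 0 i *: p i = z.
    apply/rowP => k; rewrite summxE.
    have := congr1 (fun r : 'rV[R]_N => r 0 (lift ord0 k)) cA.
    rewrite !mxE liftK => E; rewrite -[RHS]E.
    apply: eq_bigr => i _; by rewrite !mxE liftK.
  have zz : dot z z = \sum_i c 0 i * dot z (p i).
    rewrite -[X in dot z X = _]csp dot_sumr; apply: eq_bigr => i _; by rewrite dotZr.
  have E1 : \sum_i c 0 i * (\det (Am p) * c 0 i) = \det (Am p) * \sum_i c 0 i ^+ 2.
    by rewrite mulr_sumr; apply: eq_bigr => i _; rewrite mulrCA expr2.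
  have E2 : \sum_i c 0 i * (eps * (dot z (p i) - dot z pbar)) = eps * dot z z.
    under eq_bigr => i _ do rewrite mulrCA mulrBr.
    by rewrite -mulr_sumr sumrB -mulr_suml csum mul0r subr0 zz.
  have key : \det (Am p) * \sum_i c 0 i ^+ 2 + eps * dot z z = 0.
    have : \sum_i c 0 i * dot z (g i) = 0 by rewrite big1 // => i _; rewrite zg mulr0.
    rewrite /g; under eq_bigr => i _ do rewrite dotDr za dotZr dotBr mulrDr.
    by rewrite big_split /= E1 E2.
  have h1 : 0 <= \det (Am p) * \sum_i c 0 i ^+ 2.
    apply: mulr_ge0; first exact: ltW.
    by apply: sumr_ge0 => i _; rewrite sqr_ge0.
  have h2 : 0 <= eps * dot z z by apply: mulr_ge0; [exact: ltW|exact: dot_ge0].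
  have : eps * dot z z = 0 by lra.
  move/eqP; rewrite mulf_eq0 (negbTE (lt0r_neq0 epos)) /= => /eqP.
  exact: dot_eq0.
split => //.
exists (eps * (n%:R / (2 * N%:R))); split.
  by rewrite mulr_gt0 // divr_gt0 ?ltr0n // mulr_gt0 ?ltr0n.
move=> i y Ky.
have hK : forall j, K (upd p i y j) by move=> j; rewrite /upd; case: (j == i).
have := pmax _ hK; rewrite /Psi det_upd.
have e1 := adjE1 p i i; rewrite eqxx mulr1 in e1.
have e2 : eps * Qd (upd p i y) - eps * Qd p =
  eps * dot (y - p i) (p i - pbar) +
  eps * (n%:R / (2 * N%:R)) * dot (y - p i) (y - p i).
  by rewrite -mulrBr Qd_upd mulrDr mulrA.
rewrite /g dotDr dotZr dotBl.
move=> h.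
move: e1 e2 h.
set T1 := eps * Qd (upd p i y); set T0 := eps * Qd p.
set TX := eps * dot (y - p i) (p i - pbar).
set TY := _ * dot (y - p i) (y - p i).
move=> e1 e2 h.
lra.
Qed.
End Main2.

Unset Implicit Arguments.
Theorem theorem3p3 (R : realType) (n : nat) (K : set 'rV[R]_n) :
  (1 <= n)%N -> compact K -> convex.convex_set K -> full_dim K ->
  exists (u x : 'I_n.+1 -> 'rV[R]_n),
    injective x /\
    (forall i, exposed_point K (x i) /\ regular_normal_at K (u i) (x i)) /\
    simplex_facet_normals u.
Proof.
move=> n0 cK _ fd.
have [p [g [dpos [gsum [span [pK [mu [mupos ineq]]]]]]]] :=
  main_construction n0 cK fd.
have gnz i : g i != 0.
  apply/negP => /eqP gi.
  apply: (not_singleton n0 fd (x := p i)) => y Ky.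
  have := ineq i y Ky; rewrite gi dot0r => h.
  have hD := dot_ge0 (y - p i).
  have : dot (y - p i) (y - p i) = 0 by nra.
  by move/dot_eq0/eqP; rewrite subr_eq0 => /eqP.
have regular i : regular_normal_at K (nz (g i)) (p i).
  split; first exact: unit_nz.
  have npos := nrm_gt0 (gnz i).
  apply/seteqP; split => y /=.
    move=> [Ky ymax].
    have := ymax _ (pK i); rewrite /nz !dotZr ler_pM2l ?invr_gt0 // => h.
    have := ineq i y Ky; rewrite dotBl => h2.
    have hD := dot_ge0 (y - p i).
    have : dot (y - p i) (y - p i) = 0 by nra.
    by move/dot_eq0/eqP; rewrite subr_eq0 => /eqP.
  move=> ->; split => // y' Ky'.
  rewrite /nz !dotZr ler_pM2l ?invr_gt0 //.
  have := ineq i y' Ky'; rewrite dotBl => h2.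
  have hD := dot_ge0 (y' - p i).
  nra.
have inj : injective p.
  move=> i j pij; apply/eqP; apply: contraT => ij.
  have H : Am p i =1 Am p j by move=> k; rewrite !AmE pij.
  by rewrite (determinant_alternate ij H) ltxx in dpos.
exists (fun i => nz (g i)), p; split => //; split.
  by move=> i; split; [exists (nz (g i))|]; exact: regular.
exists (fun j => @wj R n j *m pinvmx (Gt g)).
exact: simplex_from.
Qed.
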